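(* Let $K\in\mathbb R^{m\times L(m+r)}$ and consider the closed loop $v(t+1)=(\Theta+\Pi K)v(t)$, $t\ge L$. Then $v(t)\to0$ as $t\to\infty$ for every realization of $v(L)\sim\mathcal N_\Phi$ if and only if $P^\top(\Theta+\Pi K)P$ is Schur.
   Context: System $\Sigma_s$: $x(t+1)=Ax(t)+Bu(t)$, $y(t)=Cx(t)$, $t\ge0$, $x\in\mathbb R^n,u\in\mathbb R^m,y\in\mathbb R^r$; standing assumptions: $(A,B,C)$ minimal, $A$ Schur. $\mathcal R_L=[A^{L-1}B,\dots,B]$, $\mathcal O_L=[C^\top,\dots,(CA^{L-1})^\top]^\top$, $\mathcal H_L$ the $Lr\times Lm$ block lower-triangular Toeplitz matrix with $(i,j)$ block $H_{i-j}$, $H_0=0$, $H_k=CA^{k-1}B$. Fix $L$ with $\operatorname{rank}\mathcal O_L=n$. $\Gamma=[\mathcal R_L-A^L\mathcal O_L^\dagger\mathcal H_L,\ A^L\mathcal O_L^\dagger]$; $\Theta=\mathrm{diag}(S_m,S_r)+EC\Gamma\in\mathbb R^{L(m+r)\times L(m+r)}$, with $S_k$ the $Lk\times Lk$ block matrix having $I_k$ in blocks $(i,i+1)$, $i<L$, zeros elsewhere, $E$ having $I_r$ in its last $r$ rows, zeros elsewhere; $\Pi\in\mathbb R^{L(m+r)\times m}$ has $I_m$ in rows $(L-1)m+1,\dots,Lm$, zeros elsewhere. (This is the dynamics of the IOH $v(t)=[u(t-L)^\top,\dots,u(t-1)^\top,y(t-L)^\top,\dots,y(t-1)^\top]^\top$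 of $\Sigma_s$ with $y=C\Gamma v$.) $\mathscr P=\mathrm{im}[\Theta^{L(m+r)-1}\Pi,\dots,\Pi]$; $P\in\mathbb R^{L(m+r)\times(Lm+n)}$ satisfies $\mathrm{im}P=\mathscr P$, $P^\top P=I$. $\Phi\ge0$ with $\mathrm{im}\Phi=\mathscr P$; $\mathcal N_\Phi$ is a Gaussian distribution with second moment about zero equal to $\Phi$. *)

(* Defs.v *)
From HB Require Import structures.
From mathcomp Require Import all_boot all_order all_algebra.
From mathcomp Require Import all_classical all_reals all_analysis.
From mathcomp Require Import complex.
Set Implicit Arguments. Unset Strict Implicit. Unset Printing Implicit Defensive.
Import Order.TTheory GRing.Theory Num.Theory.
Local Open Scope ring_scope.

Section Defs.
Variable R : realType.

Lemma blk_mod_lt (L k : nat) (i : 'I_(L * k)) : (i %% k < k)%N.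
Proof.
have h := ltn_ord i; move: h; move: (nat_of_ord i) => j.
case: k {i} => [|k]; last by rewrite ltn_mod.
by rewrite muln0.
Qed.
Definition blk_off (L k : nat) (i : 'I_(L * k)) : 'I_k := Ordinal (blk_mod_lt i).
Definition blk_num (L k : nat) (i : 'I_(L * k)) : nat := (i %/ k)%N.

(* R_L = [A^{L-1}B, ..., AB, B] *)
Definition ctrb_mx (n m L : nat) (A : 'M[R]_n) (B : 'M[R]_(n, m)) : 'M[R]_(n, L * m) :=
  \matrix_(i < n, k < L * m) (A ^+ (L - 1 - blk_num k)%N *m B) i (blk_off k).

(* O_L = [C; CA; ...; CA^{L-1}] *)
Definition obs_mx (n r L : nat) (A : 'M[R]_n) (C : 'M[R]_(r, n)) : 'M[R]_(L * r, n) :=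
  \matrix_(i < L * r, j < n) (C *m A ^+ (blk_num i)) (blk_off i) j.

(* H_L: block lower-triangular Toeplitz with (i,j) block H_{i-j}, H_0 = 0, H_k = C A^{k-1} B *)
Definition toep_mx (n m r L : nat) (A : 'M[R]_n) (B : 'M[R]_(n, m)) (C : 'M[R]_(r, n))
  : 'M[R]_(L * r, L * m) :=
  \matrix_(i < L * r, k < L * m)
    (if (blk_num k < blk_num i)%N
     then (C *m A ^+ (blk_num i - blk_num k - 1)%N *m B) (blk_off i) (blk_off k)
     else 0).

Definition pinv_fcr (p q : nat) (O : 'M[R]_(p, q)) : 'M[R]_(q, p) :=
  invmx (O^T *m O) *m O^T.

Definition Gamma_mx (n m r L : nat) (A : 'M[R]_n) (B : 'M[R]_(n, m)) (C : 'M[R]_(r, n))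
  : 'M[R]_(n, L * m + L * r) :=
  row_mx (ctrb_mx L A B - A ^+ L *m pinv_fcr (obs_mx L A C) *m toep_mx L A B C)
         (A ^+ L *m pinv_fcr (obs_mx L A C)).

(* S_k: I_k in blocks (i, i+1) *)
Definition shift_mx (L k : nat) : 'M[R]_(L * k) :=
  \matrix_(a < L * k, b < L * k) (b == (a + k)%N :> nat)%:R.

Definition E_mx (m r L : nat) : 'M[R]_(L * m + L * r, r) :=
  \matrix_(a < L * m + L * r, j < r) (a == (L * m + L * r - r + j)%N :> nat)%:R.

Definition Pi_mx (m r L : nat) : 'M[R]_(L * m + L * r, m) :=
  \matrix_(a < L * m + L * r, j < m) (a == ((L - 1) * m + j)%N :> nat)%:R.

Definition Theta_mx (n m r L : nat) (A : 'M[R]_n) (B : 'M[R]_(n, m)) (C : 'M[R]_(r, n))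
  : 'M[R]_(L * m + L * r) :=
  block_mx (shift_mx L m) 0 0 (shift_mx L r) + E_mx m r L *m C *m Gamma_mx L A B C.

(* [Theta^{N-1} Pi, ..., Theta Pi, Pi] with N = L(m+r) *)
Definition krylov_mx (N m : nat) (T : 'M[R]_N) (Pi : 'M[R]_(N, m)) : 'M[R]_(N, N * m) :=
  \matrix_(a < N, k < N * m) (T ^+ (N - 1 - blk_num k)%N *m Pi) a (blk_off k).

(* equality of column spaces (im) *)
Definition same_im (p q1 q2 : nat) (M1 : 'M[R]_(p, q1)) (M2 : 'M[R]_(p, q2)) : bool :=
  (M1^T == M2^T)%MS.

Definition schur (p : nat) (M : 'M[R]_p) : Prop :=
  forall z : R[i], root (char_poly (map_mx (real_complex R) M)) z -> `|z| < 1.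

Definition minimal (n m r : nat) (A : 'M[R]_n) (B : 'M[R]_(n, m)) (C : 'M[R]_(r, n)) : Prop :=
  \rank (ctrb_mx n A B) = n /\ \rank (obs_mx n A C) = n.

Definition psd (p : nat) (M : 'M[R]_p) : Prop :=
  M^T = M /\ forall x : 'cV[R]_p, 0 <= (x^T *m M *m x) 0 0.

(* realizations of N_Phi (zero mean, second moment Phi): values F w of a
   linear image of a standard Gaussian w, with F F^T = Phi *)
Definition gauss_realizations (p : nat) (Phi : 'M[R]_p) : set 'cV[R]_p :=
  [set x | exists (F : 'M[R]_p) (w : 'cV[R]_p), F *m F^T = Phi /\ x = F *m w].

End Defs.

(* Main.v *)
Require Import Defs.
From HB Require Import structures.
From mathcomp Require Import all_boot all_order all_algebra.
From mathcomp Require Import all_classical all_reals all_analysis.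
From mathcomp Require Import complex.
From mathcomp Require Import ring lra zify.
Import Order.TTheory GRing.Theory Num.Theory.
Import numFieldNormedType.Exports.
Local Open Scope ring_scope.
Local Open Scope classical_set_scope.
Section Aux.
Variable R : realType.
Lemma cvg0P (u : nat -> R) : (u @ \oo --> (0:R)) <->
  (forall e : R, 0 < e -> exists N, forall t, (N <= t)%N -> `|u t| < e).
Proof.
rewrite -(@norm_cvg0P R).
split.
- move=> /cvgrPdist_lt H e e0; have [N _ HN] := H e e0.
  exists N => t Nt; have := HN t Nt; by rewrite sub0r normrN normr_id.
- move=> H; apply/cvgrPdist_lt => e e0; have [N HN] := H e e0.
  exists N => // t Nt; by rewrite sub0r normrN normr_id; apply: HN.
Qed.

Lemma first_order (rho : R) (a b : nat -> R) : 0 <= rho -> rho < 1 ->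
  (forall t, 0 <= a t) -> (forall t, a t.+1 <= rho * a t + b t) ->
  b @ \oo --> (0:R) -> a @ \oo --> (0:R).
Proof.
move=> r0 r1 a0 rec /cvg0P Hb; apply/cvg0P => e e0.
have e1 : 0 < e * (1 - rho) / 2 by rewrite divr_gt0 // mulr_gt0 // subr_gt0.
have [N HN] := Hb _ e1.
have claim : forall k, a (N + k)%N <= rho ^+ k * a N + e / 2.
  elim=> [|k IH]; first by rewrite expr0 mul1r addn0 lerDl divr_ge0 // ltW.
  rewrite addnS; apply: (le_trans (rec _)).
  have hb : b (N + k)%N <= e * (1 - rho) / 2.
    by apply: le_trans (ltW (HN _ (leq_addr _ _))); apply: ler_norm.
  apply: (le_trans (lerD (ler_wpM2l r0 IH) hb)).
  by rewrite exprS le_eqVlt; apply/orP; left; apply/eqP; field.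
have hg : (GRing.exp rho : R ^nat) @ \oo --> (0:R).
  by apply: cvg_expr; rewrite ger0_norm.
have e2 : 0 < e / 2 / (a N + 1) by rewrite !divr_gt0 // ltr_wpDl.
have [N2 HN2] := (cvg0P (GRing.exp rho)).1 hg _ e2.
exists (N + N2)%N => t Nt.
have -> : t = (N + (t - N))%N by rewrite subnKC // (leq_trans (leq_addr _ _) Nt).
rewrite ger0_norm //; apply: (le_lt_trans (claim _)).
have h2 : rho ^+ (t - N) < e / 2 / (a N + 1).
  have := HN2 (t - N)%N; rewrite ger0_norm ?exprn_ge0 //; apply.
  by rewrite leq_subRL ?(leq_trans (leq_addr _ _) Nt) // addnC.
have h3 : rho ^+ (t - N) * a N <= rho ^+ (t - N) * (a N + 1).
  by rewrite ler_wpM2l ?exprn_ge0 // lerDl.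
have h4 : rho ^+ (t - N) * (a N + 1) < e / 2.
  by rewrite -ltr_pdivlMr ?ltr_wpDl.
have : rho ^+ (t - N) * a N + e / 2 < e / 2 + e / 2 by rewrite ltrD2r; apply: le_lt_trans h3 h4.
by rewrite -splitr.
Qed.
Local Notation nc := (@Normc.normc R).

Lemma nc_ge0 (z : R[i]) : 0 <= nc z.
Proof. by case: z => a b; rewrite /= sqrtr_ge0. Qed.

Lemma nc_real (x : R) : nc ((x%:C)%C) = `|x|.
Proof. by rewrite /= expr0n /= addr0 sqrtr_sqr. Qed.

Lemma prod_step (p : nat) (Y : 'M[R[i]]_p.+1) (s : seq R[i]) :
  (forall z, z \in s -> nc z < 1) ->
  (forall i j, (fun t => nc ((Y ^+ t * \prod_(z <- s) (Y - z%:M)) i j)) @ \oo --> (0:R)) ->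
  forall i j, (fun t => nc ((Y ^+ t) i j)) @ \oo --> (0:R).
Proof.
elim: s => [|z s IH] Hs H.
  by move=> i j; have := H i j; rewrite big_nil; under eq_fun do rewrite mulr1.
apply: IH => [w ws|i j]; first by apply: Hs; rewrite inE ws orbT.
set Q := \prod_(z <- s) (Y - z%:M).
apply: (@first_order (nc z) (fun t => nc ((Y ^+ t * Q) i j)) _ (nc_ge0 z) (Hs _ (mem_head _ _)) (fun t => nc_ge0 _) _ (H i j)).
move=> t /=.
have -> : Y ^+ t.+1 * Q = z *: (Y ^+ t * Q) + Y ^+ t * \prod_(z0 <- z :: s) (Y - z0%:M).
  have zQ : z%:M * Q = z *: Q by rewrite -mulmxE mul_scalar_mx.
  by rewrite big_cons -/Q mulrBl zQ mulrBr -scalerAr mulrA -exprSr addrC subrK.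
rewrite mxE [X in X + _]mxE; apply: (le_trans (le_normcD _ _)).
by rewrite Normc.normcM.
Qed.

Lemma norm_nc (z : R[i]) : `|z| = ((nc z)%:C)%C.
Proof. by case: z. Qed.

Lemma map_mxX (p : nat) (X : 'M[R]_p) t :
  map_mx (real_complex R) (X ^+ t) = (map_mx (real_complex R) X) ^+ t.
Proof.
elim: t => [|t IH]; first by rewrite !expr0 map_mx1.
by rewrite !exprS -!mulmxE map_mxM IH.
Qed.

Lemma schur_pow (p : nat) (X : 'M[R]_p) : schur X ->
  forall i j, (fun t => (X ^+ t) i j) @ \oo --> (0:R).
Proof.
case: p X => [|p] X HX i j; first by case: i.
set Y := map_mx (real_complex R) X.
have [rs Hrs] := closed_field_poly_normal (char_poly Y).
move: Hrs; rewrite (monicP (char_poly_monic Y)) scale1r => Hrs.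
have Hs : forall z, z \in rs -> nc z < 1.
  move=> z zs; have := HX z; rewrite -/Y Hrs root_prod_XsubC norm_nc ltcR; exact.
have H0 : \prod_(z <- rs) (Y - z%:M) = 0.
  rewrite -(Cayley_Hamilton Y) Hrs rmorph_prod; apply: eq_bigr => z _.
  by rewrite rmorphB /= horner_mx_X horner_mx_C.
have h : forall i j, (fun t => nc ((Y ^+ t * \prod_(z <- rs) (Y - z%:M)) i j)) @ \oo --> (0:R).
  move=> i' j'; rewrite H0.
  have -> : (fun t => nc ((Y ^+ t * 0) i' j')) = fun _ => 0.
    by apply: funext => t; rewrite mulr0 mxE nc_real normr0.
  exact: cvg_cst.
have := @prod_step p Y rs Hs h i j.
have -> : (fun t => nc ((Y ^+ t) i j)) = fun t => `|(X ^+ t) i j|.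
  by apply: funext => t; rewrite /Y -map_mxX mxE nc_real.
by move/norm_cvg0P.
Qed.

Lemma sum_cvg0 (I : finType) (f : I -> nat -> R) :
  (forall i, f i @ \oo --> (0:R)) -> (fun t => \sum_i f i t) @ \oo --> (0:R).
Proof.
move=> H; suff: forall r : seq I, (fun t => \sum_(i <- r) f i t) @ \oo --> (0:R) by apply.
elim=> [|i r IH].
  have -> : (fun t => \sum_(i <- [::]) f i t) = fun _ => 0.
    by apply: funext => t; rewrite big_nil.
  exact: cvg_cst.
have -> : (fun t => \sum_(j <- i :: r) f j t) = f i + (fun t => \sum_(j <- r) f j t).
  by apply: funext => t; rewrite big_cons.
have h := cvgD (H i) IH; rewrite addr0 in h; apply: h; apply: _.
Qed.

Lemma pow_schur (p : nat) (X : 'M[R]_p) :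
  (forall i j, (fun t => (X ^+ t) i j) @ \oo --> (0:R)) -> schur X.
Proof.
move=> HX z hz; rewrite norm_nc -(rmorph1 (real_complex R)) ltcR ltNge; apply/negP => z1.
set Y := map_mx (real_complex R) X.
move: hz; rewrite -eigenvalue_root_char => /eigenvalueP [v Hv vnz].
have Hvt : forall t, v *m Y ^+ t = z ^+ t *: v.
  elim=> [|t IH]; first by rewrite !expr0 mulmx1 scale1r.
  by rewrite exprSr -mulmxE mulmxA IH -scalemxAl Hv scalerA exprSr.
have : ~~ [forall l, v 0 l == 0].
  apply: contra vnz => /forallP H; apply/eqP/rowP => l; rewrite mxE; exact/eqP/H.
rewrite negb_forall => /existsP [l hl].
pose S t := \sum_j nc (v 0 j) * `|(X ^+ t) j l|.
have HS : S @ \oo --> (0:R).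
  apply: (@sum_cvg0 _ (fun j t => nc (v 0 j) * `|(X ^+ t) j l|)) => j.
  rewrite -(mulr0 (nc (v 0 j))); apply: cvgMr.
  by apply/norm_cvg0P; apply: HX.
have Hle : forall t, nc (v 0 l) <= S t.
  move=> t; rewrite -lecR -norm_nc.
  have e1 : 1 <= `|z| ^+ t.
    by apply: exprn_ege1; rewrite norm_nc -(rmorph1 (real_complex R)) lecR.
  apply: (le_trans (ler_peMl (normr_ge0 _) e1)).
  rewrite -normrX -normrM.
  have -> : z ^+ t * v 0 l = (v *m Y ^+ t) 0 l by rewrite Hvt mxE.
  rewrite mxE; apply: (le_trans (ler_norm_sum _ _ _)).
  rewrite /S rmorph_sum /=; apply: ler_sum => j _.
  by rewrite normrM /Y -map_mxX mxE norm_nc rmorphM /= norm_nc nc_real.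
have vl0 : 0 < nc (v 0 l).
  rewrite lt_def nc_ge0 andbT; apply: contra hl => /eqP h; apply/eqP; exact: Normc.eq0_normc.
have [N HN] := (cvg0P S).1 HS _ vl0.
have := HN N (leqnn _); rewrite ltNge; move/negP; apply.
by apply: (le_trans (Hle N)); apply: ler_norm.
Qed.
Lemma CH_expand (N : nat) (T : 'M[R]_N) : exists c : 'I_N -> R,
  T ^+ N = \sum_(i < N) c i *: T ^+ i.
Proof.
case: N T => [|N] T; first by exists (fun _ => 0); apply/matrixP => -[].
have H := Cayley_Hamilton T.
set p := char_poly T in H.
have sp : size p = N.+2 by rewrite size_char_poly.
have mp : p`_N.+1 = 1 by have := monicP (char_poly_monic T); rewrite /lead_coef sp.
have E : horner_mx T p = \sum_(i < N.+2) (map_poly scalar_mx p)`_i * T ^+ i.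
  by rewrite /horner_mx /horner_morph horner_coef size_map_poly sp.
rewrite H big_ord_recr /= coef_map /= mp mul1r in E.
exists (fun i => - p`_i); move/eqP: E; rewrite eq_sym addrC addr_eq0 => /eqP ->.
rewrite -sumrN; apply: eq_bigr => i _.
by rewrite coef_map /= -mulmxE mul_scalar_mx scaleNr.
Qed.


Lemma krylov_sub_lt (N m : nat) (T : 'M[R]_N) (Pi : 'M[R]_(N, m)) j : (j < N)%N ->
  ((T ^+ j *m Pi)^T <= (krylov_mx T Pi)^T)%MS.
Proof.
move=> jN; apply/row_subP => o.
have m0 : (0 < m)%N by case: m Pi o => [|m'] Pi [].
have cN : ((N - 1 - j) * m + o < N * m)%N.
  have h1 : (N - 1 - j < N)%N by lia.
  apply: (@leq_trans ((N - 1 - j) * m + m)); first by rewrite ltn_add2l.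
  by rewrite -mulSnr leq_mul2r h1 orbT.
pose c := Ordinal cN.
have hb : blk_num c = (N - 1 - j)%N.
  by rewrite /blk_num /= divnMDl // divn_small // addn0.
have ho : blk_off c = o.
  by apply: val_inj; rewrite /= modnMDl modn_small.
have -> : row o (T ^+ j *m Pi)^T = row c (krylov_mx T Pi)^T.
  apply/rowP => k; rewrite !mxE hb ho.
  by have -> : (N - 1 - (N - 1 - j))%N = j by lia.
exact: row_sub.
Qed.

Lemma krylov_sub (N m : nat) (T : 'M[R]_N) (Pi : 'M[R]_(N, m)) j :
  ((T ^+ j *m Pi)^T <= (krylov_mx T Pi)^T)%MS.
Proof.
elim/ltn_ind: j => j IH.
case: (ltnP j N) => jN; first exact: krylov_sub_lt.
have [c Hc] := @CH_expand N T.
have -> : T ^+ j = \sum_(i < N) c i *: T ^+ (j - N + i).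
  have -> : T ^+ j = T ^+ (j - N) * T ^+ N by rewrite -exprD subnK.
  rewrite Hc mulr_sumr; apply: eq_bigr => i _.
  by rewrite -mulmxE -scalemxAr mulmxE -exprD.
rewrite mulmx_suml linear_sum /=; apply: summx_sub => i _.
rewrite -scalemxAl linearZ /=; apply: scalemx_sub; apply: IH.
by have := ltn_ord i; lia.
Qed.

Lemma krylov_inv (N m : nat) (T : 'M[R]_N) (Pi : 'M[R]_(N, m)) (K : 'M[R]_(m, N)) :
  (((T + Pi *m K) *m krylov_mx T Pi)^T <= (krylov_mx T Pi)^T)%MS.
Proof.
apply/row_subP => c.
have hr : row c (krylov_mx T Pi)^T = row (blk_off c) ((T ^+ (N - 1 - blk_num c) *m Pi)^T).
  by apply/rowP => k; rewrite !mxE.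
rewrite trmx_mul row_mul hr linearD /= mulmxDr.
apply: addmx_sub.
  rewrite -row_mul -trmx_mul mulmxA.
  have -> : T *m T ^+ (N - 1 - blk_num c) = T ^+ (N - 1 - blk_num c).+1 by rewrite exprS mulmxE.
  exact: submx_trans (row_sub _ _) (@krylov_sub _ _ T Pi _).
apply: submx_trans (submxMl _ _) _; rewrite trmx_mul.
apply: submx_trans (submxMl _ _) _.
by have := @krylov_sub _ _ T Pi 0; rewrite expr0 mul1mx.
Qed.
Lemma form_block (p : nat) (a : 'M[R]_1) (b : 'M[R]_(1, p)) (D : 'M[R]_p) (u : R) (y : 'cV[R]_p) :
  ((col_mx (u%:M : 'M[R]_1) y)^T *m block_mx a b b^T D *m col_mx (u%:M : 'M[R]_1) y) 0 0 =
  a 0 0 * u * u + 2 * u * (b *m y) 0 0 + (y^T *m D *m y) 0 0.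
Proof.
rewrite tr_col_mx tr_scalar_mx mul_row_block mul_row_col.
rewrite !mulmxDl !mul_scalar_mx -!scalemxAl !mul_mx_scalar.
have -> : (y^T *m b^T) = (b *m y)^T by rewrite trmx_mul.
rewrite !mxE; ring.
Qed.

Lemma gram0 (k l : nat) (G : 'M[R]_(k, l)) : G *m G^T = 0 -> G = 0.
Proof.
move=> H; apply/matrixP => i j; rewrite mxE.
have := congr1 (fun M : 'M[R]_k => M i i) H; rewrite !mxE => /eqP.
rewrite psumr_eq0 => [/allP /(_ j (mem_index_enum _))|k' _]; last first.
  by rewrite mxE -expr2 sqr_ge0.
by rewrite mxE -expr2 sqrf_eq0 => /eqP.
Qed.

Lemma gram_ge0 (l : nat) (w : 'rV[R]_l) : 0 <= (w *m w^T) 0 0.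
Proof. by rewrite mxE sumr_ge0 // => j _; rewrite mxE -expr2 sqr_ge0. Qed.

Lemma blockFFt m1 m2 (A : 'M[R]_m1) (C : 'M[R]_(m2, m1)) (Dd : 'M[R]_m2) :
  block_mx A 0 C Dd *m (block_mx A 0 C Dd)^T =
  block_mx (A *m A^T) (A *m C^T) (C *m A^T) (C *m C^T + Dd *m Dd^T).
Proof. by rewrite tr_block_mx mulmx_block !trmx0 !mulmx0 !mul0mx !addr0. Qed.

Lemma psd_factor (p : nat) (Phi : 'M[R]_p) : psd Phi -> exists F : 'M[R]_p, F *m F^T = Phi.
Proof.
elim: p Phi => [|p IH] Phi [Hs Hq].
  by exists 0; apply/matrixP => -[].
pose Q : 'M[R]_(1 + p) := Phi.
have -> : Phi = block_mx (ulsubmx Q) (ursubmx Q) (dlsubmx Q) (drsubmx Q) by rewrite submxK.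
set a := ulsubmx Q; set b := ursubmx Q; set c := dlsubmx Q; set D := drsubmx Q.
have QE : Q = block_mx a b c D by rewrite submxK.
have : Q^T = Q by [].
rewrite QE tr_block_mx => /eq_block_mx [aT cT bT DT].
rewrite -bT in QE *.
have Hf : forall (u : R) (y : 'cV[R]_p), 0 <= a 0 0 * u * u + 2 * u * (b *m y) 0 0 + (y^T *m D *m y) 0 0.
  move=> u y; have := Hq (col_mx (u%:M : 'M[R]_1) y); rewrite -/Q QE form_block; exact.
set al := a 0 0.
have al0 : 0 <= al.
  have := Hf 1 0; rewrite !mulmx0 !mxE !mulr1 mulr0 !addr0 => h; by rewrite /al /a !mxE.
have b0 : al = 0 -> b = 0.
  move=> al00; apply: gram0; apply/matrixP => i j; rewrite !ord1 [RHS]mxE.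
  set sg := (b *m b^T) 0 0.
  have sg0 : 0 <= sg by apply: gram_ge0.
  rewrite le_eqVlt in sg0; case/orP: sg0 => [/eqP -> //|sgp].
  set q := (b^T^T *m D *m b^T) 0 0.
  have := Hf (- (q + 1) / (2 * sg)) b^T; rewrite -/al al00 mul0r mul0r add0r.
  have -> : 2 * (- (q + 1) / (2 * sg)) * sg + q = -1 by field; rewrite gt_eqF.
  by rewrite ler0N1.
pose be := (Num.sqrt al)^-1.
have hb : (Num.sqrt al * be) *: b = b.
  have [al00|alp] := eqVneq al 0; first by rewrite b0 // scaler0.
  by rewrite /be divrr ?scale1r // unitfE sqrtr_eq0 -ltNge lt_def alp al0.
have hbe : be * be = al^-1.
  by rewrite /be -invfM -expr2 sqr_sqrtr.
pose D' := D - al^-1 *: (b^T *m b).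
have [F' HF'] : exists F' : 'M[R]_p, F' *m F'^T = D'.
  apply: IH; split.
    by rewrite /D' linearB linearZ /= trmx_mul trmxK DT.
  move=> x.
  have -> : (x^T *m D' *m x) 0 0 = (x^T *m D *m x) 0 0 - al^-1 * ((b *m x) 0 0 * (b *m x) 0 0).
    rewrite /D' mulmxBr mulmxBl -scalemxAr -scalemxAl.
    have -> : x^T *m (b^T *m b) *m x = (b *m x)^T *m (b *m x) by rewrite mulmxA -trmx_mul -mulmxA.
    set s := b *m x; set q := x^T *m D *m x.
    by rewrite !mxE big_ord1 !mxE.
  have [al00|alp] := eqVneq al 0.
    by rewrite al00 invr0 mul0r subr0; have := Hf 0 x; rewrite !mulr0 !mul0r !add0r.
  have := Hf (- (b *m x) 0 0 / al) x.
  suff -> : al * (- (b *m x) 0 0 / al) * (- (b *m x) 0 0 / al) + 2 * (- (b *m x) 0 0 / al) * (b *m x) 0 0 +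
      (x^T *m D *m x) 0 0 = (x^T *m D *m x) 0 0 - al^-1 * ((b *m x) 0 0 * (b *m x) 0 0) by [].
  by field.
exists (block_mx (Num.sqrt al)%:M 0 (be *: b^T) F').
refine (etrans (blockFFt 1 p _ _ _) _).
rewrite HF' tr_scalar_mx -scalar_mxM -expr2 sqr_sqrtr // -mx11_scalar.
have hbT : (Num.sqrt al * be) *: b^T = b^T by rewrite -linearZ /= hb.
rewrite !linearZ /= trmxK mul_scalar_mx scalerA [be * _]mulrC hb mul_mx_scalar scalerA hbT.
rewrite -scalemxAl scalerA hbe /D' addrC subrK.
done.
Qed.
End Aux.

Theorem lemma4 (R : realType) (n m r L : nat)
  (A : 'M[R]_n) (B : 'M[R]_(n, m)) (C : 'M[R]_(r, n))
  (Hmin : minimal A B C) (HA : schur A)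
  (HL : \rank (obs_mx L A C) = n)
  (P : 'M[R]_(L * m + L * r, L * m + n))
  (HPim : same_im P (krylov_mx (Theta_mx L A B C) (Pi_mx R m r L)))
  (HPorth : P^T *m P = 1%:M)
  (Phi : 'M[R]_(L * m + L * r))
  (HPhi : psd Phi)
  (HPhiim : same_im Phi (krylov_mx (Theta_mx L A B C) (Pi_mx R m r L)))
  (K : 'M[R]_(m, L * m + L * r)) :
  (forall x, gauss_realizations Phi x ->
     forall v : nat -> 'cV[R]_(L * m + L * r),
       v L = x ->
       (forall t, (L <= t)%N -> v t.+1 = (Theta_mx L A B C + Pi_mx R m r L *m K) *m v t) ->
       forall i, (fun t => v t i ord0) @ \oo --> (0 : R))
  <-> schur (P^T *m (Theta_mx L A B C + Pi_mx R m r L *m K) *m P).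
Proof.
set T := Theta_mx L A B C; set Pi := Pi_mx R m r L.
set Kr := krylov_mx T Pi.
set M := T + Pi *m K.
set X := P^T *m M *m P.
move: HPim HPhiim; rewrite /same_im => /andP [PK KP] /andP [PhK KPh].
have MPsub : ((M *m P)^T <= P^T)%MS.
  rewrite trmx_mul; apply: submx_trans (submxMr _ PK) _.
  rewrite -trmx_mul; exact: submx_trans (krylov_inv _ _ _ T Pi K) KP.
have MP : M *m P = P *m X.
  have [E HE] := submxP MPsub.
  have HE' : M *m P = P *m E^T by rewrite -[M *m P]trmxK HE trmx_mul trmxK.
  by rewrite [in LHS]HE' /X -[P^T *m M *m P]mulmxA HE' [P^T *m (P *m _)]mulmxA HPorth mul1mx.
have MtP : forall t, M ^+ t *m P = P *m X ^+ t.
  elim=> [|t IH]; first by rewrite !expr0 mul1mx mulmx1.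
  by rewrite exprS -mulmxE -mulmxA IH mulmxA MP -mulmxA mulmxE -exprS.
have real_inP : forall x, gauss_realizations Phi x -> x = P *m (P^T *m x).
  move=> x [F [w [HF ->]]].
  set Qp := 1%:M - P *m P^T.
  have QPhi : Qp *m Phi = 0.
    have [D HD] := submxP (submx_trans PhK KP).
    have -> : Phi = P *m D^T by rewrite -[Phi]trmxK HD trmx_mul trmxK.
    by rewrite /Qp mulmxBl mul1mx -mulmxA (mulmxA P^T) HPorth mul1mx subrr.
  have QF : Qp *m F = 0.
    apply: gram0; rewrite trmx_mul mulmxA -(mulmxA Qp) HF QPhi mul0mx.
    done.
  have : Qp *m (F *m w) = 0 by rewrite mulmxA QF mul0mx.
  rewrite /Qp mulmxBl mul1mx => /eqP; rewrite subr_eq0 => /eqP H.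
  by rewrite (mulmxA P) -H.
have Pz_real : forall z, gauss_realizations Phi (P *m z).
  move=> z; have [F HF] := @psd_factor R _ Phi HPhi.
  have [D HD] := submxP (submx_trans PK KPh).
  have HP : P = Phi *m D^T by rewrite -[P]trmxK HD trmx_mul trmxK.
  exists F, (F^T *m (D^T *m z)); split => //.
  by rewrite [in LHS]HP -HF !mulmxA.
split.
  move=> H; apply: pow_schur => i j.
  pose z : 'cV[R]_(L * m + n) := delta_mx j ord0.
  pose v := fun t => M ^+ (t - L) *m (P *m z).
  have Hv := H _ (Pz_real z) v.
  have vL : v L = P *m z by rewrite /v subnn expr0 mul1mx.
  have vrec : forall t, (L <= t)%N -> v t.+1 = M *m v t.
    by move=> t Lt; rewrite /v subSn // exprS -mulmxE -mulmxA.
  have {}Hv := Hv vL vrec.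
  have E : forall t, (X ^+ t) i j = (P^T *m v (t + L)) i ord0.
    move=> t; rewrite /v addnK (mulmxA (M ^+ t)) MtP (mulmxA P^T) (mulmxA P^T P) HPorth mul1mx.
    by rewrite /z -colE mxE.
  have -> : (fun t => (X ^+ t) i j) = (fun t => \sum_a P^T i a * v (t + L) a ord0).
    by apply: funext => t; rewrite E mxE.
  apply: (@sum_cvg0 R _ (fun a t => P^T i a * v (t + L) a ord0)) => a.
  rewrite -(mulr0 (P^T i a)); apply: cvgMr.
  by have := Hv a; rewrite -(cvg_shiftn L).
move=> HX x Hx v vL Hrec i.
have xP := real_inP x Hx.
set c := P^T *m x in xP.
have Hv : forall t, v (t + L)%N = P *m (X ^+ t *m c).
  elim=> [|t IH]; first by rewrite vL expr0 mul1mx -xP.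
  by rewrite addSn Hrec ?leq_addl // IH (mulmxA M) MP -mulmxA (mulmxA X) exprS mulmxE.
rewrite -(cvg_shiftn L).
have -> : (fun t => v (t + L)%N i ord0) = (fun t => \sum_j P i j * \sum_l (X ^+ t) j l * c l ord0).
  apply: funext => t; rewrite Hv mxE; apply: eq_bigr => j _; by rewrite mxE.
apply: (@sum_cvg0 R _ (fun j t => P i j * \sum_l (X ^+ t) j l * c l ord0)) => j.
rewrite -[X in _ --> X](mulr0 (P i j)); apply: cvgMr.
apply: (@sum_cvg0 R _ (fun l t => (X ^+ t) j l * c l ord0)) => l.
rewrite -[X in _ --> X](mul0r (c l ord0)); apply: cvgMl.
exact: schur_pow.
Qed.
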